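(* Let $\mathcal P=\big((\{a\}\to\{a\searrow b\})^r_{<5}\big)^{lr}$, a class of continuous maps of topological spaces. Then: (1) a continuous map between normal Hausdorff ($T_4$) spaces lies in $\mathcal P$ iff it is proper (i.e. it is closed and the preimage of every point is compact); (2) a Hausdorff space $K$ is compact iff the map $K\to\{*\}$ lies in $\mathcal P$.
   Context: For morphisms $f:A\to B$ and $g:X\to Y$ in a category, write $f\rightthreetimes g$ (''$f$ has the left lifting property with respect to $g$'') if for all morphisms $i:A\to X$, $j:B\to Y$ with $g\circ i=j\circ f$ there exists a morphism $h:B\to X$ with $h\circ f=i$ and $g\circ h=j$. For a class $C$ of morphisms, $C^l=\{f:\ f\rightthreetimes g\text{ for all }g\in C\}$, $C^r=\{g:\ f\rightthreetimes g\text{ for all }f\in C\}$, $C^{lr}=(C^l)^r$. For a class $C$ of continuous maps, $C_{<n}$ denotes the subclass of those maps whose domain and codomain are finite spaces with fewer than $n$ points. $\{a\searrow b\}$ is the Sierpiński space with open sets $\emptyset,\{a\},\{a,b\}$, and $\{a\}\to\{a\searrow b\}$ is the inclusion of the open point $a$; $\{*\}$ is the one-point space. *)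

(* Defs.v *)
From Stdlib Require Import List Arith Classical PropExtensionality FunctionalExtensionality.
Import ListNotations.

Record space : Type := Space {
  carrier :> Type;
  is_open : (carrier -> Prop) -> Prop;
  open_full : is_open (fun _ => True);
  open_inter : forall U V, is_open U -> is_open V -> is_open (fun x => U x /\ V x);
  open_union : forall F : (carrier -> Prop) -> Prop,
      (forall U, F U -> is_open U) -> is_open (fun x => exists U, F U /\ U x)
}.
Arguments is_open {s} _.

Definition continuous {X Y : space} (f : X -> Y) : Prop :=
  forall V : Y -> Prop, is_open V -> is_open (fun x => V (f x)).

Definition is_closed {X : space} (A : X -> Prop) : Prop :=
  is_open (fun x => ~ A x).

Definition compact_set {X : space} (A : X -> Prop) : Prop :=
  forall F : (X -> Prop) -> Prop,
    (forall U, F U -> is_open U) ->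
    (forall x, A x -> exists U, F U /\ U x) ->
    exists l : list (X -> Prop),
      (forall U, In U l -> F U) /\ (forall x, A x -> exists U, In U l /\ U x).

Definition compact (X : space) : Prop := compact_set (fun _ : X => True).

Definition hausdorff (X : space) : Prop :=
  forall x y : X, x <> y ->
    exists U V : X -> Prop, is_open U /\ is_open V /\ U x /\ V y /\
      (forall z, U z -> V z -> False).

Definition normal (X : space) : Prop :=
  forall A B : X -> Prop, is_closed A -> is_closed B -> (forall z, A z -> B z -> False) ->
    exists U V : X -> Prop, is_open U /\ is_open V /\
      (forall z, A z -> U z) /\ (forall z, B z -> V z) /\
      (forall z, U z -> V z -> False).

Definition T4 (X : space) : Prop := normal X /\ hausdorff X.

Definition closed_map {X Y : space} (f : X -> Y) : Prop :=
  forall A : X -> Prop, is_closed A -> is_closed (fun y => exists x, A x /\ f x = y).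

Definition proper {X Y : space} (f : X -> Y) : Prop :=
  closed_map f /\ forall y : Y, compact_set (fun x => f x = y).

Record mor : Type := Mor {
  dom : space;
  cod : space;
  fn : dom -> cod;
  fn_cont : continuous fn
}.

Definition lifts (f g : mor) : Prop :=
  forall (i : dom f -> dom g) (j : cod f -> cod g),
    continuous i -> continuous j ->
    (forall x, fn g (i x) = j (fn f x)) ->
    exists h : cod f -> dom g, continuous h /\
      (forall x, h (fn f x) = i x) /\ (forall y, fn g (h y) = j y).

Definition mclass := mor -> Prop.

Definition lcls (C : mclass) : mclass := fun f => forall g, C g -> lifts f g.
Definition rcls (C : mclass) : mclass := fun g => forall f, C f -> lifts f g.

Definition finite_lt (n : nat) (X : space) : Prop :=
  exists l : list X, (forall x, In x l) /\ length l < n.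

Definition lt_cls (n : nat) (C : mclass) : mclass :=
  fun f => C f /\ finite_lt n (dom f) /\ finite_lt n (cod f).

Definition pt : space.
Proof.
  refine (@Space unit (fun _ => True) I _ _); intros; exact I.
Defined.

(* Sierpinski space {a ↘ b}: carrier bool, a = true, b = false;
   open sets: empty, {a}, {a,b}. *)
Definition sierp_open (U : bool -> Prop) : Prop :=
  (forall x, ~ U x) \/ (forall x, U x <-> x = true) \/ (forall x, U x).

Lemma sierp_full : sierp_open (fun _ => True).
Proof. right; right; auto. Qed.

Lemma sierp_inter : forall U V, sierp_open U -> sierp_open V ->
  sierp_open (fun x => U x /\ V x).
Proof.
  unfold sierp_open; intros U V HU HV.
  destruct HU as [HU|[HU|HU]];
  [left; intros x [Ux _]; exact (HU x Ux)|idtac|idtac];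
  (destruct HV as [HV|[HV|HV]];
  [left; intros x [_ Vx]; exact (HV x Vx)|idtac|idtac]).
  - right; left; intro x; split; [intros [Ux _]; apply HU; exact Ux|
      intro e; split; [apply HU|apply HV]; exact e].
  - right; left; intro x; split; [intros [Ux _]; apply HU; exact Ux|
      intro e; split; [apply HU; exact e|apply HV]].
  - right; left; intro x; split; [intros [_ Vx]; apply HV; exact Vx|
      intro e; split; [apply HU|apply HV; exact e]].
  - right; right; intro x; split; [apply HU|apply HV].
Qed.

Lemma sierp_union : forall F : (bool -> Prop) -> Prop,
  (forall U, F U -> sierp_open U) -> sierp_open (fun x => exists U, F U /\ U x).
Proof.
  intros F HF; unfold sierp_open.
  destruct (classic (exists U, F U /\ U false)) as [Hb|Hb].
  - right; right; intro x; destruct Hb as [U [FU Ub]].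
    destruct (HF U FU) as [H|[H|H]].
    + exfalso; exact (H _ Ub).
    + apply H in Ub; discriminate.
    + exists U; auto.
  - destruct (classic (exists U, F U /\ U true)) as [Ha|Ha].
    + right; left; intros [|]; split; auto; intro H; try discriminate;
      exfalso; apply Hb; exact H.
    + left; intros [|] H; [apply Ha|apply Hb]; exact H.
Qed.

Definition sierp : space := @Space bool sierp_open sierp_full sierp_inter sierp_union.

Definition incl_a (_ : pt) : sierp := true.

Lemma incl_a_cont : continuous incl_a.
Proof. intros V _; exact I. Qed.

Definition mor_a : mor := Mor pt sierp incl_a incl_a_cont.

Definition I_cls : mclass := fun g => g = mor_a.

Definition Pcls : mclass := rcls (lcls (lt_cls 5 (rcls I_cls))).

Definition to_pt {K : space} (_ : K) : pt := tt.

Lemma to_pt_cont (K : space) : continuous (@to_pt K).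
Proof.
  intros V _; unfold to_pt.
  destruct (classic (V tt)) as [H|H].
  - replace (V tt) with True by (apply propositional_extensionality; tauto).
    apply open_full.
  - pose proof (open_union K (fun _ => False) (fun U F => False_ind _ F)) as E.
    replace (fun _ : K => V tt) with
      (fun x : K => exists U : K -> Prop, False /\ U x); [exact E|].
    apply functional_extensionality; intro x;
    apply propositional_extensionality; firstorder.
Qed.

(* Main.v *)
Require Import Defs.
From Stdlib Require Import List Classical ClassicalEpsilon PropExtensionality FunctionalExtensionality.
From mathcomp Require filter.
Import ListNotations.

Lemma open_ext (X : space) (U V : X -> Prop) :
  (forall x, U x <-> V x) -> is_open U -> is_open V.
Proof.
  intros H HU.
  replace V with U; [exact HU|].
  apply functional_extensionality; intro x; apply propositional_extensionality; apply H.
Qed.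

Lemma open_empty (X : space) : is_open (fun _ : X => False).
Proof.
  pose proof (open_union X (fun _ => False) (fun U H => False_ind _ H)) as E.
  eapply open_ext; [|exact E]. simpl. firstorder.
Qed.

Lemma open_cover (X : space) (V : X -> Prop) :
  (forall x, V x -> exists U, is_open U /\ U x /\ forall z, U z -> V z) -> is_open V.
Proof.
  intros H.
  pose proof (open_union X (fun U => is_open U /\ forall z, U z -> V z)
    (fun U HU => proj1 HU)) as E.
  eapply open_ext; [|exact E]. simpl. intro x; split.
  - intros [U [[_ HU] Ux]]; auto.
  - intro Vx. destruct (H x Vx) as [U [HU [Ux HUV]]]. exists U; auto.
Qed.

Lemma closed_compl (X : space) (V : X -> Prop) : is_open V -> is_closed (fun x => ~ V x).
Proof.
  intros H; unfold is_closed. eapply open_ext; [|exact H]. intro x; split; tauto.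
Qed.

Lemma open_compl (X : space) (C : X -> Prop) : is_closed C -> is_open (fun x => ~ C x).
Proof. intro H; exact H. Qed.

Definition Q : mclass := lt_cls 5 (rcls I_cls).

Lemma sierp_const (Z : space) (z : Z) : continuous (fun _ : sierp => z).
Proof.
  intros V _. simpl. unfold sierp_open.
  destruct (classic (V z)); [right; right; auto | left; auto].
Qed.

Lemma topt_rcls (Z : space) (h : Z -> pt) (hc : continuous h) : rcls I_cls (Mor Z pt h hc).
Proof.
  intros f0 Hf; unfold I_cls in Hf; subst f0. unfold lifts; simpl. intros i j ci cj sq.
  exists (fun _ => i tt). split; [apply sierp_const|]. split.
  - intros []; reflexivity.
  - intros y. destruct (h (i tt)); destruct (j y); reflexivity.
Qed.

Definition cb (_ : pt) : sierp := false.
Lemma cb_cont : continuous cb.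
Proof. intros V _; exact I. Qed.
Definition mor_b : mor := Mor pt sierp cb cb_cont.

Lemma mor_b_Q : Q mor_b.
Proof.
  split; [|split].
  - intros f0 Hf; unfold I_cls in Hf; subst f0. unfold lifts; simpl. intros i j ci cj sq.
    exists (fun _ => tt). split; [apply sierp_const|]. split.
    + intros []; destruct (i tt); reflexivity.
    + assert (jt : j true = false) by (symmetry; exact (sq tt)).
      intros [|]; [rewrite jt; reflexivity|].
      unfold cb. destruct (j false) eqn:E; [|reflexivity]. exfalso.
      assert (Ho : sierp_open (fun x => x = true)) by (right; left; tauto).
      destruct (cj _ Ho) as [H|[H|H]]; simpl in H.
      * exact (H false E).
      * apply (proj1 (H false)) in E; discriminate.
      * pose proof (H true) as Ht; simpl in Ht; congruence.
  - exists [tt]; split; [intros []; simpl; auto|simpl; auto].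
  - exists [true; false]; split; [intros [|]; simpl; auto|simpl; auto].
Qed.

(* three-point space: None = open point, Some b = closed points *)
Definition F3_open (U : option bool -> Prop) : Prop := forall b, U (Some b) -> U None.
Lemma F3_full : F3_open (fun _ => True). Proof. intros b _; exact I. Qed.
Lemma F3_inter : forall U V, F3_open U -> F3_open V -> F3_open (fun x => U x /\ V x).
Proof. intros U V HU HV b [a c]; split; eauto. Qed.
Lemma F3_union : forall F : (option bool -> Prop) -> Prop,
  (forall U, F U -> F3_open U) -> F3_open (fun x => exists U, F U /\ U x).
Proof. intros F HF b [U [FU Ub]]. exists U; split; auto. exact (HF U FU b Ub). Qed.
Definition F3 : space := @Space (option bool) F3_open F3_full F3_inter F3_union.
Definition F3_to (_ : F3) : pt := tt.
Lemma F3_to_cont : continuous F3_to.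
Proof. intros V _. simpl. intros b H; exact H. Qed.
Definition mor_F3 : mor := Mor F3 pt F3_to F3_to_cont.
Lemma mor_F3_Q : Q mor_F3.
Proof.
  split; [apply topt_rcls|split].
  - exists [None; Some true; Some false]; split; [intros [[|]|]; simpl; auto|simpl; auto].
  - exists [tt]; split; [intros []; simpl; auto|simpl; auto].
Qed.

Record ufilt (T : Type) := UF {
  uset :> (T -> Prop) -> Prop;
  uT : uset (fun _ => True);
  uI : forall P R, uset P -> uset R -> uset (fun x => P x /\ R x);
  uS : forall P R : T -> Prop, (forall x, P x -> R x) -> uset P -> uset R;
  une : ~ uset (fun _ => False);
  uU : forall P, uset P \/ uset (fun x => ~ P x)
}.
Arguments uset {T}. Arguments uT {T}. Arguments uI {T}. Arguments uS {T}.
Arguments une {T}. Arguments uU {T}.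

Lemma my_ultra (T : Type) (G : (T->Prop)->Prop) :
  G (fun _ => True) -> (forall P R, G P -> G R -> G (fun x => P x /\ R x)) ->
  (forall P R : T -> Prop, (forall x, P x -> R x) -> G P -> G R) -> ~ G (fun _ => False) ->
  exists U : ufilt T, forall P, G P -> U P.
Proof.
  intros H1 H2 H3 H4.
  assert (PF : filter.ProperFilter G).
  { constructor. exact H4. constructor. exact H1.
    intros P R HP HQ. exact (H2 P R HP HQ). exact H3. }
  destruct (filter.ultraFilterLemma PF) as [U [UU GU]].
  pose proof (@filter.ultra_proper _ _ UU) as UP.
  destruct UP as [ne fl]. destruct fl as [fT fI fS].
  unshelve eexists (@UF T U _ _ _ _ _).
  - exact fT.
  - intros P R a b; exact (fI P R a b).
  - exact fS.
  - exact ne.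
  - intro P; exact (filter.in_ultra_setVsetC P UU).
  - exact GU.
Qed.

Lemma ufilt_ex (T : Type) (u : ufilt T) (P : T -> Prop) : u P -> exists x, P x.
Proof.
  intros H. apply NNPP; intro N. apply (une u).
  apply (uS u P); [|exact H]. intros x Px; apply N; eauto.
Qed.

Section Ext.
Variable A : space.
Variable u : ufilt A.

Definition ext_open (W : option A -> Prop) : Prop :=
  is_open (fun a => W (Some a)) /\ (W None -> u (fun a => W (Some a))).

Lemma ext_full : ext_open (fun _ => True).
Proof. split; [apply open_full| intros _; apply uT]. Qed.
Lemma ext_inter : forall U V, ext_open U -> ext_open V -> ext_open (fun x => U x /\ V x).
Proof.
  intros U V [HU1 HU2] [HV1 HV2]; split.
  - apply (open_inter A _ _ HU1 HV1).
  - intros [a b]; apply (uI u); auto.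
Qed.
Lemma ext_union : forall F : (option A -> Prop) -> Prop,
  (forall U, F U -> ext_open U) -> ext_open (fun x => exists U, F U /\ U x).
Proof.
  intros F HF; split.
  - pose proof (open_union A (fun V => exists W, F W /\ V = (fun a => W (Some a)))) as E.
    eapply open_ext; [|apply E].
    + intro x; split.
      * intros [V [[W [FW ->]] Vx]]; eauto.
      * intros [W [FW Wx]]. exists (fun a => W (Some a)); split; eauto.
    + intros V [W [FW ->]]. exact (proj1 (HF W FW)).
  - intros [W [FW WN]]. apply (uS u (fun a => W (Some a))).
    + intros x Wx; eauto.
    + exact (proj2 (HF W FW) WN).
Qed.

Definition ext : space := @Space (option A) ext_open ext_full ext_inter ext_union.
Definition ext_in (a : A) : ext := Some a.
Lemma ext_in_cont : continuous ext_in.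
Proof. intros V [H _]; exact H. Qed.
Definition mor_ext : mor := Mor A ext ext_in ext_in_cont.

Lemma list_ultra (T : Type) (v : ufilt T) (X : Type) (i : T -> X) (l : list X) :
  (forall m, In m l -> v (fun a => i a <> m)) -> v (fun a => forall m, In m l -> i a <> m).
Proof.
  induction l as [|m l IH]; intros H.
  - apply (uS v (fun _ => True)); [intros x _ m []|apply uT].
  - apply (uS v (fun a => i a <> m /\ forall m', In m' l -> i a <> m')).
    + intros x [H1 H2] m' [<-|Hm']; auto.
    + apply uI; [apply H; left; auto| apply IH; intros; apply H; right; auto].
Qed.

Lemma ext_L : lcls Q mor_ext.
Proof.
  intros g [Hg [[l [Hl _]] _]]. unfold lifts; simpl. intros i j ci cj sq.
  assert (Hm : exists m, u (fun a => i a = m)).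
  { apply NNPP; intro N.
    assert (Hc : forall m, In m l -> u (fun a => i a <> m)).
    { intros m _. destruct (uU u (fun a => i a = m)) as [H|H]; [exfalso; eauto|exact H]. }
    apply (une u). apply (uS u (fun a => forall m, In m l -> i a <> m)).
    - intros x H; exact (H (i x) (Hl (i x)) eq_refl).
    - apply list_ultra; exact Hc. }
  destruct Hm as [m Hm].
  set (y := j None).
  assert (Hy : forall O, is_open O -> O y -> O (fn g m)).
  { intros O HO Oy. destruct (cj O HO) as [_ H2]. specialize (H2 Oy).
    destruct (ufilt_ex _ u _ (uI u _ _ H2 Hm)) as [a [Ha1 Ha2]].
    rewrite <- Ha2. rewrite (sq a). exact Ha1. }
  destruct (Hg mor_a eq_refl (fun _ => m) (fun b : sierp => if b then fn g m else y))
    as [h2 [ch2 [h2a h2b]]].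
  - intros V _; exact I.
  - intros V HV. simpl. unfold sierp_open.
    destruct (classic (V y)) as [Vy|Vy].
    + right; right; intros [|]; [exact (Hy V HV Vy)|exact Vy].
    + destruct (classic (V (fn g m))) as [Vm|Vm].
      * right; left; intros [|]; split; auto; intro; try discriminate; contradiction.
      * left; intros [|]; auto.
  - intros x; reflexivity.
  - set (z := h2 false).
    assert (Hz1 : fn g z = y) by exact (h2b false).
    assert (Hz2 : forall O, is_open O -> O z -> O m).
    { intros O HO Oz. destruct (ch2 O HO) as [H|[H|H]]; simpl in H.
      - exfalso; exact (H false Oz).
      - apply (proj1 (H false)) in Oz; discriminate.
      - rewrite <- (h2a tt). exact (H true). }
    exists (fun w : option A => match w with Some a => i a | None => z end).
    split; [|split].
    + intros O HO. split.
      * exact (ci O HO).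
      * intros Oz. apply (uS u _ _ (fun x (H : i x = m) => eq_ind_r O (Hz2 O HO Oz) H) Hm).
    + intros x; reflexivity.
    + intros [a|]; [exact (sq a)|exact Hz1].
Qed.
End Ext.

Definition regular (X : space) : Prop :=
  forall (x : X) V, is_open V -> V x ->
    exists W D, is_open W /\ is_closed D /\ W x /\ (forall z, W z -> D z) /\ (forall z, D z -> V z).

Lemma const_cont (Z W : space) (w : W) : continuous (fun _ : Z => w).
Proof.
  intros V _. destruct (classic (V w)) as [H|H].
  - eapply open_ext; [|apply open_full]. intro; split; auto.
  - eapply open_ext; [|apply open_empty]. intro; split; [intros []|auto].
Qed.

Section PropP.
Variables X Y : space.
Variable g : X -> Y.
Variable hg : continuous g.
Hypothesis reg : regular X.
Hypothesis hau : hausdorff X.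
Hypothesis gcl : closed_map g.
Hypothesis gcpt : forall y, compact_set (fun x => g x = y).

Variables A B : space.
Variable f : A -> B.
Variable cf : continuous f.
Hypothesis Lf : lcls Q (Mor A B f cf).
Variable i : A -> X.
Variable j : B -> Y.
Hypothesis ci : continuous i.
Hypothesis cj : continuous j.
Hypothesis sq : forall a, g (i a) = j (f a).

Lemma dens : forall b U, is_open U -> U b -> exists a, U (f a).
Proof.
  intros b U HU Ub. apply NNPP; intro N.
  destruct (Lf mor_b mor_b_Q (fun _ => tt) (fun w => if excluded_middle_informative (U w) then true else false))
    as [h [_ [_ H]]].
  - apply const_cont.
  - intros V HV. simpl in HV. apply open_cover. intros w Vw.
    destruct (excluded_middle_informative (U w)) as [Uw|Uw].
    + exists U; split; [exact HU|split; [exact Uw|]].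
      intros z Uz. destruct (excluded_middle_informative (U z)); [exact Vw|contradiction].
    + destruct HV as [H|[H|H]].
      * exfalso; exact (H false Vw).
      * apply (proj1 (H false)) in Vw; discriminate.
      * exists (fun _ => True); split; [apply open_full|split; [exact I|]].
        intros z _. destruct (excluded_middle_informative (U z)); apply H.
  - intros a. simpl. unfold cb. destruct (excluded_middle_informative (U (f a))); [|reflexivity].
    exfalso; eauto.
  - specialize (H b). simpl in H. unfold cb in H.
    destruct (excluded_middle_informative (U b)); [discriminate|contradiction].
Qed.

Lemma sep : forall D1 D2 : X -> Prop, is_closed D1 -> is_closed D2 ->
  (forall z, D1 z -> D2 z -> False) -> forall b,
  (forall U, is_open U -> U b -> exists a, U (f a) /\ D1 (i a)) ->
  (forall U, is_open U -> U b -> exists a, U (f a) /\ D2 (i a)) -> False.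
Proof.
  intros D1 D2 C1 C2 Dis b H1 H2.
  set (k := fun a : A => if excluded_middle_informative (D1 (i a)) then Some true
                       else if excluded_middle_informative (D2 (i a)) then Some false else None).
  assert (kc : continuous (k : A -> F3)).
  { intros O HO. simpl in HO. apply open_cover. intros a Oa.
    unfold k in Oa.
    destruct (excluded_middle_informative (D1 (i a))) as [d1|d1].
    - exists (fun a' => ~ D2 (i a')). split; [exact (ci _ C2)|split; [intro; eauto|]].
      intros a' Na'. unfold k. destruct (excluded_middle_informative (D1 (i a'))); [exact Oa|].
      destruct (excluded_middle_informative (D2 (i a'))); [contradiction|exact (HO true Oa)].
    - destruct (excluded_middle_informative (D2 (i a))) as [d2|d2].
      + exists (fun a' => ~ D1 (i a')). split; [exact (ci _ C1)|split; [exact d1|]].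
        intros a' Na'. unfold k. destruct (excluded_middle_informative (D1 (i a'))); [contradiction|].
        destruct (excluded_middle_informative (D2 (i a'))); [exact Oa|exact (HO false Oa)].
      + exists (fun a' => ~ D1 (i a') /\ ~ D2 (i a')).
        split; [exact (open_inter A _ _ (ci _ C1) (ci _ C2))|split; [auto|]].
        intros a' [n1 n2]. unfold k.
        destruct (excluded_middle_informative (D1 (i a'))); [contradiction|].
        destruct (excluded_middle_informative (D2 (i a'))); [contradiction|exact Oa]. }
  destruct (Lf mor_F3 mor_F3_Q k (fun _ => tt) kc (const_cont B pt tt)) as [h [ch [hk _]]].
  { intros a; reflexivity. }
  simpl in hk.
  assert (E : forall bb, (forall U, is_open U -> U b -> exists a, U (f a) /\ k a = Some bb) ->
                h b = Some bb).
  { intros bb Hb. apply NNPP; intro N.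
    assert (HO : is_open (fun w : F3 => w <> Some bb)).
    { intros c Hc. discriminate. }
    destruct (Hb _ (ch _ HO) N) as [a [Ha1 Ha2]]. simpl in Ha1.
    rewrite hk in Ha1. contradiction. }
  assert (E1 : h b = Some true).
  { apply E. intros U HU Ub. destruct (H1 U HU Ub) as [a [Ua Da]]. exists a; split; auto.
    unfold k; destruct (excluded_middle_informative (D1 (i a))); [reflexivity|contradiction]. }
  assert (E2 : h b = Some false).
  { apply E. intros U HU Ub. destruct (H2 U HU Ub) as [a [Ua Da]]. exists a; split; auto.
    unfold k; destruct (excluded_middle_informative (D1 (i a))); [exfalso; eauto|].
    destruct (excluded_middle_informative (D2 (i a))); [reflexivity|contradiction]. }
  rewrite E1 in E2; discriminate.
Qed.

Definition clusterC (C : X -> Prop) (b : B) (x : X) : Prop :=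
  forall U, is_open U -> U b -> forall V, is_open V -> V x ->
    exists a, U (f a) /\ V (i a) /\ C (i a).

Lemma list_nbhd (Fm : (X -> Prop) -> Prop) (C : X -> Prop) (b : B) (l : list (X -> Prop)) :
  (forall V, In V l -> exists U, is_open U /\ U b /\
      forall a, U (f a) -> C (i a) -> ~ V (i a)) ->
  exists U, is_open U /\ U b /\ forall V, In V l -> forall a, U (f a) -> C (i a) -> ~ V (i a).
Proof.
  induction l as [|V0 l IH]; intros H.
  - exists (fun _ => True); split; [apply open_full|split; [exact I|]]. intros V [].
  - destruct (H V0 (or_introl eq_refl)) as [U0 [HU0 [U0b HU0']]].
    destruct IH as [U1 [HU1 [U1b HU1']]]; [intros; apply H; right; auto|].
    exists (fun w => U0 w /\ U1 w). split; [apply open_inter; auto|split; [auto|]].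
    intros V [<-|HV] a [Ua1 Ua2]; eauto.
Qed.

Lemma clus_ex : forall b (C : X -> Prop), is_closed C ->
  (forall U, is_open U -> U b -> exists a, U (f a) /\ C (i a)) ->
  exists x, g x = j b /\ C x /\ clusterC C b x.
Proof.
  intros b C HC H. apply NNPP; intro N.
  set (Fm := fun V : X -> Prop => is_open V /\ exists U, is_open U /\ U b /\
      forall a, U (f a) -> C (i a) -> ~ V (i a)).
  destruct (gcpt (j b) Fm) as [l [Hl1 Hl2]].
  - intros V [HV _]; exact HV.
  - intros x gx. destruct (classic (C x)) as [Cx|Cx].
    + assert (Nc : ~ clusterC C b x) by (intro Hc; apply N; eauto).
      unfold clusterC in Nc.
      apply not_all_ex_not in Nc as [U Nc].
      apply imply_to_and in Nc as [HU Nc]. apply imply_to_and in Nc as [Ub Nc].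
      apply not_all_ex_not in Nc as [V Nc].
      apply imply_to_and in Nc as [HV Nc]. apply imply_to_and in Nc as [Vx Nc].
      exists V; split; [|exact Vx]. split; [exact HV|]. exists U; split; [exact HU|split; [exact Ub|]].
      intros a Ua Ca Va. apply Nc; eauto.
    + exists (fun z => ~ C z); split; [|exact Cx]. split; [exact HC|].
      exists (fun _ => True); split; [apply open_full|split; [exact I|]].
      intros a _ Ca Na; contradiction.
  - destruct (list_nbhd Fm C b l) as [U0 [HU0 [U0b HU0']]].
    { intros V HV. exact (proj2 (Hl1 V HV)). }
    set (Vu := fun x => exists V, In V l /\ V x).
    assert (HVu : is_open Vu).
    { apply (open_union X (fun V => In V l)). intros V HV; exact (proj1 (Hl1 V HV)). }
    assert (HE : is_closed (fun x => ~ Vu x)) by (apply closed_compl; exact HVu).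
    pose proof (gcl _ HE) as HgE. unfold is_closed in HgE.
    pose proof (cj _ HgE) as HO. simpl in HO.
    assert (Ob : ~ exists x, ~ Vu x /\ g x = j b).
    { intros [x [Nx gx]]. apply Nx. exact (Hl2 x gx). }
    destruct (H _ (open_inter B _ _ HU0 HO) (conj U0b Ob)) as [a [[Ua Oa] Ca]].
    apply Oa. exists (i a). split; [|apply sq].
    intros [V [InV Va]]. exact (HU0' V InV a Ua Ca Va).
Qed.

Definition cluster (b : B) (x : X) : Prop :=
  forall U, is_open U -> U b -> forall V, is_open V -> V x -> exists a, U (f a) /\ V (i a).

Lemma uniq : forall b x1 x2, cluster b x1 -> cluster b x2 -> x1 = x2.
Proof.
  intros b x1 x2 H1 H2. apply NNPP; intro N.
  destruct (hau x1 x2 N) as [U1 [U2 [HU1 [HU2 [U1x [U2x Dis]]]]]].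
  destruct (reg x1 U1 HU1 U1x) as [W1 [D1 [HW1 [HD1 [W1x [WD1 DU1]]]]]].
  destruct (reg x2 U2 HU2 U2x) as [W2 [D2 [HW2 [HD2 [W2x [WD2 DU2]]]]]].
  apply (sep D1 D2 HD1 HD2 (fun z d1 d2 => Dis z (DU1 z d1) (DU2 z d2)) b).
  - intros U HU Ub. destruct (H1 U HU Ub W1 HW1 W1x) as [a [Ua Wa]]. eauto.
  - intros U HU Ub. destruct (H2 U HU Ub W2 HW2 W2x) as [a [Ua Wa]]. eauto.
Qed.

Lemma closed_full : is_closed (fun _ : X => True).
Proof. unfold is_closed. eapply open_ext; [|apply open_empty]. intro; split; tauto. Qed.

Lemma ex_h : forall b, exists x, g x = j b /\ cluster b x.
Proof.
  intros b. destruct (clus_ex b (fun _ => True) closed_full) as [x [gx [_ Hx]]].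
  - intros U HU Ub. destruct (dens b U HU Ub) as [a Ha]; eauto.
  - exists x; split; [exact gx|]. intros U HU Ub V HV Vx.
    destruct (Hx U HU Ub V HV Vx) as [a [? [? _]]]; eauto.
Qed.

Definition h (b : B) : X := proj1_sig (constructive_indefinite_description _ (ex_h b)).
Lemma h_spec b : g (h b) = j b /\ cluster b (h b).
Proof. unfold h; destruct (constructive_indefinite_description _ (ex_h b)); auto. Qed.

Lemma h_f a : h (f a) = i a.
Proof.
  apply (uniq (f a)); [apply h_spec|].
  intros U HU Ua V HV Va. eauto.
Qed.

Lemma h_conv b V : is_open V -> V (h b) -> exists U, is_open U /\ U b /\
   forall a, U (f a) -> V (i a).
Proof.
  intros HV Vh. apply NNPP; intro N.
  assert (H : forall U, is_open U -> U b -> exists a, U (f a) /\ ~ V (i a)).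
  { intros U HU Ub. apply NNPP; intro N2. apply N. exists U; split; [auto|split; [auto|]].
    intros a Ua. apply NNPP; intro Na. apply N2; eauto. }
  destruct (clus_ex b (fun x => ~ V x) (closed_compl _ _ HV) H) as [x [_ [Nx Hx]]].
  assert (E : x = h b).
  { apply (uniq b); [|apply h_spec].
    intros U HU Ub W HW Wx. destruct (Hx U HU Ub W HW Wx) as [a [? [? _]]]; eauto. }
  rewrite E in Nx; contradiction.
Qed.

Lemma h_cont : continuous h.
Proof.
  intros V HV. apply open_cover. intros b Vb.
  destruct (reg (h b) V HV Vb) as [W [D [HW [HD [Wh [WD DV]]]]]].
  destruct (h_conv b W HW Wh) as [U [HU [Ub HUW]]].
  exists U; split; [exact HU|split; [exact Ub|]].
  intros b' Ub'. apply DV. apply NNPP; intro ND.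
  destruct (proj2 (h_spec b') U HU Ub' _ HD ND) as [a [Ua Na]].
  apply Na, WD, HUW, Ua.
Qed.

End PropP.


Lemma P_limit (X Y : space) (g : X -> Y) (hg : continuous g) :
  Pcls (Mor X Y g hg) ->
  forall G : (X -> Prop) -> Prop,
  G (fun _ => True) -> (forall P R, G P -> G R -> G (fun x => P x /\ R x)) ->
  (forall P R : X -> Prop, (forall x, P x -> R x) -> G P -> G R) -> ~ G (fun _ => False) ->
  forall y, (forall O, is_open O -> O y -> G (fun x => O (g x))) ->
  exists x0, g x0 = y /\ forall V, is_open V -> V x0 -> forall S, G S -> exists x, S x /\ V x.
Proof.
  intros HP G G1 G2 G3 G4 y Hy.
  destruct (my_ultra X G G1 G2 G3 G4) as [u Hu].
  destruct (HP (mor_ext X u) (ext_L X u) (fun x => x)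
     (fun w : ext X u => match w with Some x => g x | None => y end)) as [h [ch [h1 h2]]].
  - intros V HV; exact HV.
  - intros O HO. split; [exact (hg O HO)|]. intros Oy. apply Hu, Hy; auto.
  - intros x; reflexivity.
  - simpl in h1, h2. exists (h None). split; [exact (h2 None)|].
    intros V HV Vx S GS.
    destruct (ch V HV) as [_ H]. specialize (H Vx).
    destruct (ufilt_ex _ u _ (uI u _ _ (Hu S GS) H)) as [x [Sx Vhx]].
    exists x; split; [exact Sx|]. rewrite <- (h1 x). exact Vhx.
Qed.

Lemma P_compact_fib (X Y : space) (g : X -> Y) (hg : continuous g) :
  Pcls (Mor X Y g hg) -> forall y, compact_set (fun x => g x = y).
Proof.
  intros HP y Fm HFm Hcov. apply NNPP; intro N.
  set (G := fun S : X -> Prop => exists l : list (X -> Prop), (forall V, In V l -> Fm V) /\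
              forall x, g x = y -> ~ (exists V, In V l /\ V x) -> S x).
  destruct (P_limit X Y g hg HP G) with (y := y) as [x0 [gx0 Hx0]].
  - exists []; split; [intros V []|auto].
  - intros P R [l1 [H1 H1']] [l2 [H2 H2']]. exists (l1 ++ l2); split.
    + intros V HV; apply in_app_or in HV as [HV|HV]; auto.
    + intros x gx Nx; split; [apply H1'|apply H2']; auto;
      intros [V [InV Vx]]; apply Nx; exists V; split; auto; apply in_or_app; auto.
  - intros P R HPR [l [H1 H2]]. exists l; split; auto.
  - intros [l [H1 H2]]. apply N. exists l; split; auto.
    intros x gx. apply NNPP; intro Nx. exact (H2 x gx Nx).
  - intros O HO Oy. exists []; split; [intros V []|]. intros x gx _; rewrite gx; exact Oy.
  - destruct (Hcov x0 gx0) as [V [FV Vx0]].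
    destruct (Hx0 V (HFm V FV) Vx0 (fun x => g x = y /\ ~ V x)) as [x [[_ Nx] Vx]].
    + exists [V]; split; [intros V' [<-|[]]; auto|].
      intros x gx Nx; split; [auto|]. intro Vx; apply Nx; exists V; split; [left|]; auto.
    + contradiction.
Qed.

Lemma P_closed (X Y : space) (g : X -> Y) (hg : continuous g) :
  Pcls (Mor X Y g hg) -> closed_map g.
Proof.
  intros HP C HC. unfold is_closed. apply open_cover. intros y Ny.
  apply NNPP; intro N.
  set (G := fun S : X -> Prop => exists O, is_open O /\ O y /\ forall x, C x -> O (g x) -> S x).
  destruct (P_limit X Y g hg HP G) with (y := y) as [x0 [gx0 Hx0]].
  - exists (fun _ => True); split; [apply open_full|split; auto].
  - intros P R [O1 [H1 [O1y H1']]] [O2 [H2 [O2y H2']]].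
    exists (fun w => O1 w /\ O2 w); split; [apply open_inter; auto|split; [auto|]].
    intros x Cx [o1 o2]; split; auto.
  - intros P R HPR [O [H1 [H2 H3]]]. exists O; split; [auto|split; auto].
  - intros [O [H1 [H2 H3]]]. apply N. exists O; split; [auto|split; [auto|]].
    intros z Oz [x [Cx gx]]. subst z. exact (H3 x Cx Oz).
  - intros O HO Oy. exists O; split; [auto|split; auto].
  - assert (Cx0 : ~ C x0) by (intro Cx0; apply Ny; exists x0; auto).
    destruct (Hx0 _ HC Cx0 C) as [x [Cx NCx]]; [|contradiction].
    exists (fun _ => True); split; [apply open_full|split; auto].
Qed.

Lemma proper_P (X Y : space) (g : X -> Y) (hg : continuous g) :
  regular X -> hausdorff X -> proper g -> Pcls (Mor X Y g hg).
Proof.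
  intros reg hau [gcl gcpt] [A B f cf] Lf. unfold lifts; simpl. intros i j ci cj sq.
  exists (h X Y g gcl gcpt A B f cf Lf i j cj sq). split; [|split].
  - exact (h_cont X Y g reg hau gcl gcpt A B f cf Lf i j ci cj sq).
  - exact (h_f X Y g reg hau gcl gcpt A B f cf Lf i j ci cj sq).
  - intro b. exact (proj1 (h_spec X Y g gcl gcpt A B f cf Lf i j cj sq b)).
Qed.

Lemma point_closed (X : space) : hausdorff X -> forall x : X, is_closed (fun z => z = x).
Proof.
  intros hau x. unfold is_closed. apply open_cover. intros z Nz.
  destruct (hau z x Nz) as [U [V [HU [HV [Uz [Vx Dis]]]]]].
  exists U; split; [auto|split; [auto|]]. intros w Uw ->. exact (Dis x Uw Vx).
Qed.

Lemma T4_regular (X : space) : T4 X -> regular X.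
Proof.
  intros [nX hX] x V HV Vx.
  destruct (nX (fun z => z = x) (fun z => ~ V z) (point_closed X hX x) (closed_compl X V HV))
    as [W [O [HW [HO [H1 [H2 H3]]]]]].
  { intros z -> Nz; contradiction. }
  exists W, (fun z => ~ O z). split; [auto|split; [apply closed_compl; auto|split; [auto|split]]].
  - intros z Wz Oz; exact (H3 z Wz Oz).
  - intros z Nz. apply NNPP; intro Nv. exact (Nz (H2 z Nv)).
Qed.

Lemma list_sep (X : space) (x : X) (Fm : (X -> Prop) -> Prop) (l : list (X -> Prop)) :
  (forall V, Fm V -> exists U, is_open U /\ U x /\ forall z, U z -> V z -> False) ->
  exists U, is_open U /\ U x /\ forall V, In V l -> Fm V -> forall z, U z -> V z -> False.
Proof.
  intros HF. induction l as [|V0 l IH].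
  - exists (fun _ => True); split; [apply open_full|split; [exact I|]]. intros V [].
  - destruct IH as [U1 [HU1 [U1x H1]]].
    destruct (classic (Fm V0)) as [F0|F0].
    + destruct (HF V0 F0) as [U0 [HU0 [U0x H0]]].
      exists (fun z => U0 z /\ U1 z); split; [apply open_inter; auto|split; [auto|]].
      intros V [<-|InV] FV z [a b] Vz; eauto.
    + exists U1; split; [auto|split; [auto|]].
      intros V [<-|InV] FV z Uz Vz; [contradiction|eauto].
Qed.

Lemma compact_regular (K : space) : compact K -> hausdorff K -> regular K.
Proof.
  intros cK hK x V HV Vx.
  set (Fm := fun V' : K -> Prop => is_open V' /\ exists U, is_open U /\ U x /\
               forall z, U z -> V' z -> False).
  destruct (cK (fun V' => Fm V' \/ V' = V)) as [l [Hl1 Hl2]].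
  - intros V' [[H _]| ->]; auto.
  - intros z _. destruct (classic (V z)) as [Vz|Vz]; [exists V; auto|].
    assert (zx : z <> x) by (intros ->; contradiction).
    destruct (hK z x zx) as [U1 [U2 [HU1 [HU2 [U1z [U2x Dis]]]]]].
    exists U1; split; [left; split; [auto|]|auto].
    exists U2; split; [auto|split; [auto|]]. intros w a b; exact (Dis w b a).
  - destruct (list_sep K x Fm l) as [U [HU [Ux HUl]]].
    + intros V' [_ H]; exact H.
    + exists U, (fun z => ~ exists V', In V' l /\ Fm V' /\ V' z).
      split; [auto|split; [|split; [auto|split]]].
      * apply closed_compl. eapply open_ext;
          [|apply (open_union K (fun V' => In V' l /\ Fm V'))].
        -- intro z; split; [intros [V' [[a b] c]]; eauto|intros [V' [a [b c]]]; eauto].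
        -- intros V' [_ [H _]]; exact H.
      * intros z Uz [V' [InV [FV Vz]]]. exact (HUl V' InV FV z Uz Vz).
      * intros z Nz. apply NNPP; intro Nv.
        destruct (Hl2 z I) as [V' [InV V'z]].
        destruct (Hl1 V' InV) as [FV| ->]; [|contradiction].
        apply Nz; exists V'; auto.
Qed.

Lemma to_pt_proper (K : space) : compact K -> proper (@to_pt K).
Proof.
  intros cK. split.
  - intros A _. exact I.
  - intros [] F HF Hcov.
    destruct (cK F HF (fun x _ => Hcov x eq_refl)) as [l [H1 H2]].
    exists l; split; auto.
Qed.

Theorem claim1 :
  (forall (X Y : space) (f : X -> Y) (hf : continuous f),
      T4 X -> T4 Y -> (Pcls (Mor X Y f hf) <-> proper f))
  /\
  (forall K : space, hausdorff K ->
      (compact K <-> Pcls (Mor K pt (@to_pt K) (to_pt_cont K)))).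
Proof.
  split.
  - intros X Y f hf TX _. split.
    + intro HP. split; [exact (P_closed _ _ _ hf HP)|exact (P_compact_fib _ _ _ hf HP)].
    + intro Hp. apply proper_P; [apply T4_regular; exact TX|exact (proj2 TX)|exact Hp].
  - intros K hK. split.
    + intro cK. apply proper_P; [apply compact_regular; auto|exact hK|apply to_pt_proper; exact cK].
    + intro HP. pose proof (P_compact_fib _ _ _ _ HP tt) as H.
      intros F HF Hcov. destruct (H F HF (fun x _ => Hcov x I)) as [l [H1 H2]].
      exists l; split; [exact H1|]. intros x _. apply H2. reflexivity.
Qed.
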